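(* Let $K=(V,E)$ be a finite graph with at least $s\geqslant1$ connected components. Let $\mathscr{C}$ be a color set of size at least $|V|$ that contains at least $|V|-s+1$ distinct colors. Then there exists a coloring of $K$ by $\mathscr{C}$.
   Context: A color set is a finite multiset (elements, i.e. colors, may appear with multiplicities). A coloring of a graph $K=(V,E)$ by a color set $\mathscr{C}$ is a map $\phi\colon V\to\mathscr{C}$, into the elements of the multiset counted with multiplicity, with two properties. First, each element of $\mathscr{C}$ is used at most once, i.e. $|\phi^{-1}(c)|\leqslant1$ for every element $c$ of $\mathscr{C}$. Second, adjacent vertices receive different colors (as values): $\phi(u)\neq\phi(v)$ whenever $(u,v)\in E$. *)

(* Defs.v *)
From mathcomp Require Import all_boot.
Set Implicit Arguments. Unset Strict Implicit. Unset Printing Implicit Defensive.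

Definition simple_graph (V : finType) (e : rel V) : Prop :=
  symmetric e /\ irreflexive e.

Definition num_components (V : finType) (e : rel V) : nat := n_comp e V.

(* A color set (multiset) is a sequence cs : seq Col; its elements (with
   multiplicity) are the positions 'I_(size cs); the color value of position
   i is tnth (in_tuple cs) i. A coloring maps vertices injectively to
   positions (each element used at most once), with adjacent vertices
   receiving different color values. *)
Definition color_of (Col : eqType) (cs : seq Col) (i : 'I_(size cs)) : Col :=
  tnth (in_tuple cs) i.

Definition is_coloring (V : finType) (e : rel V) (Col : eqType) (cs : seq Col)
    (phi : V -> 'I_(size cs)) : Prop :=
  injective phi /\ forall u v, e u v -> color_of (phi u) != color_of (phi v).

(* Main.v *)
Require Import Defs.
From mathcomp Require Import all_boot zify.
Set Implicit Arguments. Unset Strict Implicit. Unset Printing Implicit Defensive.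

Lemma sumn_ge2 (T : eqType) (g : T -> nat) (l : seq T) :
  (forall x, x \in l -> 1 < g x) -> 2 * size l <= sumn (map g l).
Proof.
elim: l => [|a l IH] //= H.
rewrite mulnS; apply: leq_add; first by apply: H; rewrite inE eqxx.
by apply: IH => x xl; apply: H; rewrite inE xl orbT.
Qed.

Lemma undup2 (T : eqType) (s : seq T) :
  (forall x, x \in s -> 1 < count_mem x s) -> 2 * size (undup s) <= size s.
Proof.
move=> H.
rewrite -(perm_size (perm_count_undup s)) size_flatten /shape -map_comp.
have -> : [seq (size \o (fun x => nseq (count_mem x s) x)) i | i <- undup s]
   = [seq count_mem i s | i <- undup s].
  by apply: eq_map => x /=; rewrite size_nseq.
by apply: sumn_ge2 => x; rewrite mem_undup; apply: H.
Qed.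
Lemma two_k (V : finType) (c : V -> V) (A : {set V}) :
  (forall v, v \in A -> exists2 u, u \in A & (u != v) && (c u == c v)) ->
  2 * #|c @: A| <= #|A|.
Proof.
move=> H.
rewrite -[#|A|]sum1_card (partition_big_imset c) /= mulnC -sum_nat_const.
apply: leq_sum => j /imsetP [v vA ->].
have [u uA /andP[uv cuv]] := H v vA.
rewrite (bigD1 v) /=; last by rewrite vA eqxx.
rewrite (bigD1 u) /=; last by rewrite uA cuv uv.
by rewrite addnA.
Qed.
Definition cnt_ok (V : finType) (Col : eqType) (A : {set V}) (f : V -> Col) cs :=
  forall x, #|[set v in A | f v == x]| <= count_mem x cs.
Definition conf_ok (V : finType) (Col : eqType) (c : V -> V) (A : {set V}) (f : V -> Col) :=
  forall u w, u \in A -> w \in A -> u != w -> c u = c w -> f u != f w.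
Definition alone (V : finType) (c : V -> V) (A : {set V}) v :=
  forall u, u \in A -> c u = c v -> u = v.

Lemma extend (V : finType) (Col : eqType) (c : V -> V) (A : {set V}) cs v (x : Col) f :
  v \in A -> x \in cs -> alone c A v \/ count_mem x cs = 1 ->
  cnt_ok (A :\ v) f (rem x cs) -> conf_ok c (A :\ v) f ->
  cnt_ok A (fun u => if u == v then x else f u) cs /\
  conf_ok c A (fun u => if u == v then x else f u).
Proof.
move=> vA xcs Hav Hc Hf; split.
  move=> y; have := Hc y; rewrite count_mem_rem => Hy.
  have Hcnt : count_mem y cs = count_mem y (rem x cs) + (x == y).
    rewrite count_mem_rem subnK //; case: eqP => // <-.
    by rewrite -has_count has_pred1.
  rewrite Hcnt.
  case: (eqVneq x y) => [<-|xy].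
    rewrite /nat_of_bool addn1; apply: (@leq_trans #|v |: [set u in A :\ v | f u == x]|).
      apply: subset_leq_card; apply/subsetP => w; rewrite !inE.
      by case: (eqVneq w v) => //= _ /andP[-> ->].
    by rewrite cardsU1 !inE eqxx /= add1n ltnS Hc.
  rewrite /nat_of_bool addn0.
  apply: leq_trans (Hc y); apply: subset_leq_card; apply/subsetP => w; rewrite !inE.
  case: (eqVneq w v) => /= [_ /andP[_ H]|_ ->//]; by rewrite (negbTE xy) in H.
have Hnx : forall w, w \in A :\ v -> c w = c v -> f w != x.
  move=> w wA cw; case: Hav => [al | c1].
    by case/setD1P: wA => wv wA'; rewrite (al w wA' cw) eqxx in wv.
  apply/negP => /eqP fw.
  have := Hc x; rewrite count_mem_rem c1 eqxx subnn leqn0 cards_eq0 => /eqP E.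
  by have := in_set0 w; rewrite -E inE wA fw eqxx.
move=> u w uA wA uw cuw.
case: (eqVneq u v) => [eu|nu]; case: (eqVneq w v) => [ew|nw].
- by rewrite eu ew eqxx in uw.
- by rewrite eq_sym; apply: Hnx; [rewrite !inE nw | rewrite -cuw eu].
- by apply: Hnx; [rewrite !inE nu | rewrite cuw ew].
- by apply: Hf; rewrite ?inE ?nu ?nw.
Qed.
Lemma kbound (V : finType) (c : V -> V) (A : {set V}) v :
  #|c @: A| <= #|c @: (A :\ v)|.+1.
Proof.
apply: (leq_trans (subset_leq_card (_ : c @: A \subset c v |: c @: (A :\ v)))).
  apply/subsetP => y /imsetP [u uA ->].
  case: (eqVneq u v) => [->|uv]; first by rewrite setU11.
  by rewrite setU1r // imset_f // !inE uv.
by rewrite cardsU1; case: (_ \notin _).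
Qed.

Lemma knot (V : finType) (c : V -> V) (A : {set V}) v u :
  u \in A -> u != v -> c u = c v -> #|c @: A| <= #|c @: (A :\ v)|.
Proof.
move=> uA uv cuv; apply: subset_leq_card; apply/subsetP => y /imsetP [w wA ->].
case: (eqVneq w v) => [->|wv]; first by rewrite -cuv imset_f // !inE uv.
by rewrite imset_f // !inE wv.
Qed.

Lemma dbound (T : eqType) (x : T) cs : x \in cs ->
  size (undup cs) <= (size (undup (rem x cs))).+1.
Proof.
move=> xcs.
have -> : (size (undup (rem x cs))).+1 = size (x :: undup (rem x cs)) by [].
apply: uniq_leq_size; first exact: undup_uniq.
move=> y; rewrite mem_undup (perm_mem (perm_to_rem xcs)) !inE mem_undup //.
Qed.

Lemma ddup (T : eqType) (x : T) cs : 1 < count_mem x cs ->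
  size (undup cs) <= size (undup (rem x cs)).
Proof.
move=> x2.
apply: uniq_leq_size; first exact: undup_uniq.
move=> y; rewrite !mem_undup -!has_pred1 !has_count count_mem_rem.
case: (eqVneq x y) => [<-|]; last by rewrite subn0.
by move=> _; rewrite subn_gt0.
Qed.

Definition aloneb (V : finType) (c : V -> V) (A : {set V}) v :=
  [forall u in A, (c u == c v) ==> (u == v)].

Lemma alonebP (V : finType) (c : V -> V) (A : {set V}) v :
  aloneb c A v -> alone c A v.
Proof. by move=> /forall_inP H u uA cu; apply/eqP; apply: (implyP (H u uA)); rewrite cu. Qed.

Lemma nalonebP (V : finType) (c : V -> V) (A : {set V}) v :
  ~~ aloneb c A v -> exists2 u, u \in A & (u != v) && (c u == c v).
Proof.
move=> /forall_inPn [u uA]; rewrite negb_imply => /andP[cu uv].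
by exists u => //; rewrite uv cu.
Qed.

Lemma main (V : finType) (c : V -> V) (Col : eqType) (x0 : Col) N :
  forall (A : {set V}) cs, #|A| + size cs <= N -> #|A| <= size cs ->
  #|A| <= size (undup cs) + #|c @: A| - 1 ->
  exists f : V -> Col, cnt_ok A f cs /\ conf_ok c A f.
Proof.
elim: N => [|N IH] A cs HN Hm Hd.
  have A0 : A = set0 by apply/eqP; rewrite -cards_eq0; lia.
  exists (fun _ => x0); split => [y|u w]; last by rewrite A0 inE.
  by rewrite A0; apply: leq_trans (_ : 0 <= _) => //; rewrite leqn0 cards_eq0; apply/eqP/setP => u; rewrite !inE.
have [A0|[v0 v0A]] := set_0Vmem A.
  exists (fun _ => x0); split => [y|u w]; last by rewrite A0 inE.
  by rewrite A0; apply: leq_trans (_ : 0 <= _) => //; rewrite leqn0 cards_eq0; apply/eqP/setP => u; rewrite !inE.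
have cardD v : v \in A -> #|A :\ v| = #|A| - 1.
  by move=> vA; rewrite (cardsD1 v A) vA; lia.
have kpos : 0 < #|c @: A| by rewrite card_gt0; apply/set0Pn; exists (c v0); apply: imset_f.
have step v x : v \in A -> x \in cs -> alone c A v \/ count_mem x cs = 1 ->
    #|A :\ v| <= size (undup (rem x cs)) + #|c @: (A :\ v)| - 1 ->
    exists f : V -> Col, cnt_ok A f cs /\ conf_ok c A f.
  move=> vA xcs Hav Hd'.
  have [|||f [Hc Hf]] := IH (A :\ v) (rem x cs).
  - by rewrite cardD // size_rem //; lia.
  - by rewrite cardD // size_rem //; lia.
  - done.
  by exists (fun u => if u == v then x else f u); apply: extend.
case: (boolP (has (fun x => 1 < count_mem x cs) cs)) => [/hasP [x xcs x2] | /hasPn nodup].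
  case: (ltnP #|A| (size cs)) => [lt | ge].
    have [|||f [Hc Hf]] := IH A (rem x cs).
    - by rewrite size_rem //; lia.
    - by rewrite size_rem //; lia.
    - by have := ddup x2; lia.
    exists f; split => // y; apply: leq_trans (Hc y) _; by rewrite count_mem_rem leq_subr.
  case: (boolP [exists v in A, aloneb c A v]) => [/exists_inP [v vA av] | noal].

    apply: (step v x vA xcs); first by left; apply: alonebP.
    have := ddup x2; have := kbound c A v; rewrite cardD //; lia.
  have nal : forall v, v \in A -> exists2 u, u \in A & (u != v) && (c u == c v).
    by move=> v vA; apply: nalonebP; apply: contra noal => av; apply/exists_inP; exists v.
  case: (boolP (has (fun y => count_mem y cs == 1) cs)) => [/hasP [y ycs /eqP y1] | /hasPn nou].
    apply: (step v0 y v0A ycs); first by right.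
    have [u uA /andP [uv /eqP cu]] := nal v0 v0A.
    have := dbound ycs; have := knot uA uv cu; rewrite cardD //; lia.
  exfalso.
  have h1 := two_k nal.
  have h2 : 2 * size (undup cs) <= size cs.
    apply: undup2 => y ycs; have := nou y ycs.
    have : 0 < count_mem y cs by rewrite -has_count has_pred1.
    lia.
  have : 0 < #|A| by rewrite card_gt0; apply/set0Pn; exists v0.
  lia.
have ucs : uniq cs.
  apply: count_mem_uniq => y; case: (boolP (y \in cs)) => [ycs|ycs].
    have := nodup y ycs; have : 0 < count_mem y cs by rewrite -has_count has_pred1.
    lia.
  by apply/count_memPn.
have dm : size (undup cs) = size cs by rewrite undup_id.
have [x xcs] : exists x, x \in cs.
  case E: cs => [|x s]; last by exists x; rewrite inE eqxx.
  by move: Hm; rewrite E /= leqn0 cards_eq0 => /eqP A0; rewrite A0 inE in v0A.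
have x1 : count_mem x cs = 1 by rewrite count_uniq_mem // xcs.
case: (boolP [exists v in A, ~~ aloneb c A v]) => [/exists_inP [v vA nav] | allal].
  have [u uA /andP [uv /eqP cu]] := nalonebP nav.
  apply: (step v x vA xcs); first by right.
  have := dbound xcs; have := knot uA uv cu; rewrite cardD //; lia.
have al : forall v, v \in A -> alone c A v.
  by move=> v vA; apply: alonebP; move: allal => /exists_inPn /(_ v vA); rewrite negbK.
have kn : #|c @: A| = #|A|.
  apply: card_in_imset => u w uA wA cuw; exact: (al w wA u uA cuw).
apply: (step v0 x v0A xcs); first by left; apply: al.
have := dbound xcs; have := kbound c A v0; rewrite cardD //; lia.
Qed.
Lemma count_pos (Col : eqType) (cs : seq Col) (x : Col) :
  count_mem x cs = size [seq i <- enum 'I_(size cs) | color_of i == x].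
Proof.
rewrite size_filter.
have := count_map (tnth (in_tuple cs)) (pred1 x) (enum 'I_(size cs)).
rewrite map_tnth_enum /= => ->.
by apply: eq_count => i; rewrite /color_of.
Qed.

Lemma conv (V : finType) (Col : eqType) (cs : seq Col) (f : V -> Col) :
  (forall x, #|[set v | f v == x]| <= count_mem x cs) ->
  exists phi : V -> 'I_(size cs), injective phi /\ forall v, color_of (phi v) = f v.
Proof.
move=> Hc.
have [V0|[v0 _]] := set_0Vmem [set: V].
  have nv : forall v : V, False by move=> v; have := in_setT v; rewrite V0 inE.
  by exists (fun v => match nv v with end); split => [u|u]; case: (nv u).
pose L x := [seq i <- enum 'I_(size cs) | color_of i == x].
pose S v := enum [set u | f u == f v].
have szpos : 0 < size cs.
  have := Hc (f v0); rewrite (count_pos cs (f v0)) => H.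
  have : 0 < size (L (f v0)).
    by apply: leq_trans H; rewrite card_gt0; apply/set0Pn; exists v0; rewrite inE.
  by rewrite size_filter => /(leq_trans)/(_ (count_size _ _)); rewrite size_enum_ord.
pose i0 := Ordinal szpos.
pose phi v := nth i0 (L (f v)) (index v (S v)).
have rlt v : index v (S v) < size (L (f v)).
  apply: (leq_trans _ (leq_trans (Hc (f v)) _)); last by rewrite count_pos.
  by rewrite /S cardE index_mem mem_enum inE.
have col v : color_of (phi v) = f v.
  have := mem_nth i0 (rlt v); rewrite mem_filter => /andP[/eqP -> _] //.
exists phi; split => // u v E.
have fuv : f u = f v by rewrite -(col u) E col.
have Luniq : uniq (L (f v)) by rewrite filter_uniq // enum_uniq.
have := rlt u; rewrite fuv => ru.
have := E; rewrite /phi fuv => /eqP; rewrite nth_uniq // => /eqP.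
have -> : S u = S v by rewrite /S fuv.
move=> Ei.
have uS : u \in S v by rewrite mem_enum inE fuv.
have vS : v \in S v by rewrite mem_enum inE.
by rewrite -(nth_index u uS) Ei nth_index.
Qed.

Theorem lemma4p7 (V : finType) (e : rel V) (Col : eqType) (cs : seq Col) (s : nat) :
  simple_graph e ->
  1 <= s ->
  s <= num_components e ->
  #|V| <= size cs ->
  #|V| - s + 1 <= size (undup cs) ->
  exists phi : V -> 'I_(size cs), is_coloring e phi.
Proof.
move=> [sym irr] s1 sk Hm Hd.
have csym := sym_connect_sym sym.
case E: cs => [|x0 t].
  have nv : forall v : V, False.
    by move=> v; move: Hm; rewrite E /= leqn0 => /eqP/card0_eq/(_ v).
  by exists (fun v => match nv v with end); split => [u|u]; case: (nv u).
rewrite -E.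
have kb : num_components e <= #|root e @: [set: V]|.
  rewrite /num_components; apply: subset_leq_card; apply/subsetP => r.
  rewrite !inE => /andP [rr _]; rewrite -(eqP rr); exact: imset_f.
have [||| f [Hc Hf]] := @main V (root e) Col x0 (#|V| + size cs) [set: V] cs.
- by rewrite cardsT.
- by rewrite cardsT.
- rewrite cardsT; lia.
have [phi [phiI col]] : exists phi : V -> 'I_(size cs), injective phi /\ forall v, color_of (phi v) = f v.
  apply: conv => x; apply: leq_trans (Hc x); apply: subset_leq_card; apply/subsetP => v.
  by rewrite !inE.
exists phi; split => // u v euv; rewrite !col.
apply: Hf; rewrite ?inE //.
  by apply: contraTneq euv => ->; rewrite irr.
by apply/eqP; rewrite (root_connect csym); apply: connect1.
Qed.
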